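(* Let $$\begin{array}{ccc} X\times_B Y & \xrightarrow{\pi_2} & Y\\ \downarrow{\scriptstyle\pi_1} & & \downarrow{\scriptstyle p}\\ X & \xrightarrow{q} & B\end{array}$$ be a pullback diagram in the category $\mathbf{Loc}$ of locales, where $\pi_1$ is an isomorphism, $\pi_2$ is an open surjection and $q$ is a coequalizer. Then $p$ is an isomorphism.
   Context: A map of locales is open if its inverse image frame homomorphism has a left adjoint satisfying the Frobenius condition; it is surjective if its inverse image is injective. *)

(* Defs.v *)
Record Frame := {
  carrier :> Type;
  fle : carrier -> carrier -> Prop;
  fle_refl : forall a, fle a a;
  fle_trans : forall a b c, fle a b -> fle b c -> fle a c;
  fle_antisym : forall a b, fle a b -> fle b a -> a = b;
  ftop : carrier;
  ftop_max : forall a, fle a ftop;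
  fmeet : carrier -> carrier -> carrier;
  fmeet_glb : forall a b c, fle c (fmeet a b) <-> (fle c a /\ fle c b);
  fjoin : (carrier -> Prop) -> carrier;
  fjoin_ub : forall (P : carrier -> Prop) a, P a -> fle a (fjoin P);
  fjoin_least : forall (P : carrier -> Prop) b,
      (forall a, P a -> fle a b) -> fle (fjoin P) b;
  fdistr : forall (a : carrier) (P : carrier -> Prop),
      fmeet a (fjoin P) = fjoin (fun y => exists x, P x /\ y = fmeet a x)
}.

Arguments fle {f} _ _.
Arguments ftop {f}.
Arguments fmeet {f} _ _.
Arguments fjoin {f} _.

Definition pimage {A B : Type} (f : A -> B) (P : A -> Prop) : B -> Prop :=
  fun y => exists x, P x /\ y = f x.

Record FrameHom (A B : Frame) := {
  hfun :> A -> B;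
  hom_top : hfun ftop = ftop;
  hom_meet : forall a b, hfun (fmeet a b) = fmeet (hfun a) (hfun b);
  hom_join : forall P : A -> Prop, hfun (fjoin P) = fjoin (pimage hfun P)
}.

Arguments hfun {A B} _ _.

Lemma fjoin_ext (F : Frame) (P Q : F -> Prop) :
  (forall x, P x <-> Q x) -> fjoin P = fjoin Q.
Proof.
  intros H; apply fle_antisym; apply fjoin_least; intros a Ha;
  apply fjoin_ub; apply H; exact Ha.
Qed.

Definition hcomp_fun {A B C : Frame} (g : FrameHom B C) (f : FrameHom A B)
  : A -> C := fun a => g (f a).

Lemma hcomp_top {A B C : Frame} (g : FrameHom B C) (f : FrameHom A B) :
  hcomp_fun g f ftop = ftop.
Proof. unfold hcomp_fun; rewrite hom_top, hom_top; reflexivity. Qed.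

Lemma hcomp_meet {A B C : Frame} (g : FrameHom B C) (f : FrameHom A B) a b :
  hcomp_fun g f (fmeet a b) = fmeet (hcomp_fun g f a) (hcomp_fun g f b).
Proof. unfold hcomp_fun; rewrite hom_meet, hom_meet; reflexivity. Qed.

Lemma hcomp_join {A B C : Frame} (g : FrameHom B C) (f : FrameHom A B) P :
  hcomp_fun g f (fjoin P) = fjoin (pimage (hcomp_fun g f) P).
Proof.
  unfold hcomp_fun; rewrite hom_join, hom_join; apply fjoin_ext.
  intros z; unfold pimage; split.
  - intros [y [[x [Hx ->]] ->]]; exists x; split; auto.
  - intros [x [Hx ->]]; exists (f x); split; auto; exists x; auto.
Qed.

Definition hcomp {A B C : Frame} (g : FrameHom B C) (f : FrameHom A B)
  : FrameHom A C :=
  {| hfun := hcomp_fun g f; hom_top := hcomp_top g f;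
     hom_meet := hcomp_meet g f; hom_join := hcomp_join g f |}.

Lemma hid_join (A : Frame) (P : A -> Prop) :
  (fun a : A => a) (fjoin P) = fjoin (pimage (fun a : A => a) P).
Proof.
  apply fjoin_ext; intros x; unfold pimage; split.
  - intros Hx; exists x; auto.
  - intros [y [Hy ->]]; exact Hy.
Qed.

Definition hid (A : Frame) : FrameHom A A :=
  {| hfun := fun a => a; hom_top := eq_refl;
     hom_meet := fun _ _ => eq_refl; hom_join := hid_join A |}.

(** * The category Loc = Frm^op.
    A locale is represented by its frame of opens; a locale map
    f : X -> Y is a frame homomorphism f^* : O(Y) -> O(X). *)
Definition Locale := Frame.
Definition LocMap (X Y : Locale) := FrameHom Y X.

Definition inv_img {X Y : Locale} (f : LocMap X Y) : Y -> X := hfun f.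

Definition lcomp {X Y Z : Locale} (g : LocMap Y Z) (f : LocMap X Y)
  : LocMap X Z := hcomp f g.

Definition lid (X : Locale) : LocMap X X := hid X.

Definition leq_map {X Y : Locale} (f g : LocMap X Y) : Prop :=
  forall b : Y, inv_img f b = inv_img g b.

Definition loc_iso {X Y : Locale} (f : LocMap X Y) : Prop :=
  exists g : LocMap Y X,
    leq_map (lcomp g f) (lid X) /\ leq_map (lcomp f g) (lid Y).

Definition loc_open {X Y : Locale} (f : LocMap X Y) : Prop :=
  exists l : X -> Y,
    (forall (a : X) (b : Y), fle (l a) b <-> fle a (inv_img f b)) /\
    (forall (a : X) (b : Y), l (fmeet a (inv_img f b)) = fmeet (l a) b).

Definition loc_surj {X Y : Locale} (f : LocMap X Y) : Prop :=
  forall b b' : Y, inv_img f b = inv_img f b' -> b = b'.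

Definition is_pullback {P X Y B : Locale}
  (pi1 : LocMap P X) (pi2 : LocMap P Y) (q : LocMap X B) (p : LocMap Y B)
  : Prop :=
  leq_map (lcomp q pi1) (lcomp p pi2) /\
  forall (Z : Locale) (f : LocMap Z X) (g : LocMap Z Y),
    leq_map (lcomp q f) (lcomp p g) ->
    exists h : LocMap Z P,
      leq_map (lcomp pi1 h) f /\ leq_map (lcomp pi2 h) g /\
      forall h' : LocMap Z P,
        leq_map (lcomp pi1 h') f -> leq_map (lcomp pi2 h') g ->
        leq_map h' h.

Definition is_coequalizer {X B : Locale} (q : LocMap X B) : Prop :=
  exists (W : Locale) (f g : LocMap W X),
    leq_map (lcomp q f) (lcomp q g) /\
    forall (Z : Locale) (h : LocMap X Z),
      leq_map (lcomp h f) (lcomp h g) ->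
      exists k : LocMap B Z,
        leq_map (lcomp k q) h /\
        forall k' : LocMap B Z, leq_map (lcomp k' q) h -> leq_map k' k.

(* Main.v *)
Require Import Defs.

Theorem lemma2p3 (P X Y B : Locale)
  (pi1 : LocMap P X) (pi2 : LocMap P Y) (q : LocMap X B) (p : LocMap Y B) :
  is_pullback pi1 pi2 q p ->
  loc_iso pi1 ->
  loc_open pi2 -> loc_surj pi2 ->
  is_coequalizer q ->
  loc_iso p.
Proof.
  intros [Hsq Hpb] [j [Hj1 Hj2]] _ Hsurj [W [f [g [Hfg Hco]]]].
  unfold leq_map, lcomp, lid, inv_img in *; cbn in *.
  unfold hcomp_fun in *.
  set (s := lcomp pi2 j).
  assert (HA : forall b, j (pi2 (p b)) = q b).
  { intros b. rewrite <- Hsq. apply Hj2. }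
  assert (HC : forall y, f (j (pi2 y)) = g (j (pi2 y))).
  { destruct (Hpb W f (lcomp s g)) as [h [Hh1 [Hh2 _]]].
    - intros b; unfold lcomp, s; cbn; unfold hcomp_fun.
      change (f (q b) = g (j (pi2 (p b)))). rewrite HA. apply Hfg.
    - intros y. unfold lcomp, s in *; cbn in *; unfold hcomp_fun in *.
      rewrite <- Hh1, Hj1. apply Hh2. }
  destruct (Hco Y s) as [k [Hk _]].
  { intros y; unfold lcomp, s; cbn; unfold hcomp_fun. apply HC. }
  destruct (Hco B q) as [k0 [_ Hk0]].
  { exact Hfg. }
  unfold leq_map, lcomp, s in *; cbn in *; unfold hcomp_fun in *.
  exists k; split; intros b; cbn; unfold hcomp_fun.
  - apply Hsurj. unfold inv_img.
    rewrite <- (Hj1 (pi2 (p (k b)))), <- (Hj1 (pi2 b)).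
    f_equal. rewrite HA. apply Hk.
  - assert (E1 := Hk0 (lcomp p k)).
    assert (E2 := Hk0 (lid B)).
    unfold leq_map, lcomp, lid, inv_img in E1, E2; cbn in E1, E2;
      unfold hcomp_fun in E1, E2.
    rewrite E1, E2; auto.
    intros c. rewrite Hk. apply HA.
Qed.
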